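(* Let $\mathbf A$ be regular of bandwidth $(p,q)$, $\sigma=d\tau-\dim\ker\mathbf A$, $L\le R$ finite with $N=R-L+1\ge\tau+2\sigma$, $\overline L=L+\sigma-1$, $\overline R=R-\sigma+1$. Define the square matrices $$K^-=\mathbf P_{L-p',\overline L-p'}\mathbf A|_{\mathcal V_{L,\overline L}},\qquad K^+=\mathbf P_{\overline R-q',R-q'}\mathbf A|_{\mathcal V_{\overline R,R}}.$$ Then $\mathcal F_L^-=\ker K^-$ and $\mathcal F_R^+=\ker K^+$.
   Context: Fix $d\ge1$. $\mathcal V^S_d$: doubly infinite sequences $\Psi=\{\psi_j\}_{j\in\mathbb Z}$, $\psi_j\in\mathbb C^d$. A matrix Laurent polynomial of bandwidth $(p,q)$ is $\sum_{r=p}^qa_rw^r$, integers $p\le q$, $a_r$ complex $d\times d$, $a_p\ne0\ne a_q$; its BBL transformation is $(\mathbf A\Psi)_j=\sum_ra_r\psi_{j+r}$; $\mathbf T$ is the left shift $(\mathbf T\Psi)_j=\psi_{j+1}$, $\mathbf T^{-1}$ the right shift. $\mathbf A$ is regular if $\det(w^{-p}A(w,w^{-1}))$ is not the zero polynomial (then $\ker\mathbf A$ is finite-dimensional). $p'=\min(p,0)$, $q'=\max(0,q)$, $\tau=q'-p'$. For $-\infty\le L\le R\le\infty$: $\mathcal V_{L,R}$ = sequences with $\psi_j=0$ for $j\notin[L,R]$; $\mathbf P_{L,R}$ = projection onto $\mathcal V_{L,R}$ zeroing entries outside $[L,R]$; bulk solution space $\mathcal M_{L,R}=\ker(\mathbf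 P_{L-p',R-q'}\mathbf A|_{\mathcal V_{L,R}})$ (infinite endpoints stay infinite). Define $\mathcal F_L^-=\{\Psi\in\mathcal M_{L,\infty}: (\mathbf P_{L,\infty}\mathbf T)^k\Psi=0\text{ for some }k\ge1\}$ and $\mathcal F_R^+=\{\Psi\in\mathcal M_{-\infty,R}: (\mathbf P_{-\infty,R}\mathbf T^{-1})^k\Psi=0\text{ for some }k\ge1\}$. $K^\pm$ are viewed as linear maps $\mathcal V_{L,\overline L}\to\mathcal V_{L-p',\overline L-p'}$ and $\mathcal V_{\overline R,R}\to\mathcal V_{\overline R-q',R-q'}$ (both spaces of dimension $d\sigma$). *)

(* Defs.v *)
From HB Require Import structures.
From mathcomp Require Import all_boot all_order all_algebra.
Set Implicit Arguments. Unset Strict Implicit. Unset Printing Implicit Defensive.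
Import Order.TTheory GRing.Theory Num.Theory.
Local Open Scope ring_scope.

Section BBL.
Variables (C : numClosedFieldType) (d : nat).

Definition seqZ := int -> 'cV[C]_d.

(* BBL transformation of the matrix Laurent polynomial sum_{r=p}^q a_r w^r *)
Definition bbl (a : int -> 'M[C]_d) (p q : int) (Psi : seqZ) : seqZ :=
  fun j => \sum_(k < `|q - p|%N.+1) a (p + k%:Z) *m Psi (j + (p + k%:Z)).

Definition bandwidth (a : int -> 'M[C]_d) (p q : int) : Prop :=
  [/\ p <= q, a p != 0, a q != 0 & forall r, (r < p) || (q < r) -> a r = 0].

(* regular: det (w^{-p} A(w)) is not the zero polynomial *)
Definition regular (a : int -> 'M[C]_d) (p q : int) : Prop :=
  \det (\matrix_(i, j) \poly_(k < `|q - p|%N.+1) (a (p + k%:Z) i j))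
    != 0 :> {poly C}.

Definition shiftT (Psi : seqZ) : seqZ := fun j => Psi (j + 1).
Definition shiftTinv (Psi : seqZ) : seqZ := fun j => Psi (j - 1).

(* extended bounds: None = -oo for a lower bound, +oo for an upper bound *)
Definition in_range (lo hi : option int) (j : int) : bool :=
  (if lo is Some l then l <= j else true) && (if hi is Some h then j <= h else true).

Definition ext_add (b : option int) (c : int) : option int :=
  if b is Some x then Some (x + c) else None.

Definition inV (lo hi : option int) (Psi : seqZ) : Prop :=
  forall j, ~~ in_range lo hi j -> Psi j = 0.

Definition proj (lo hi : option int) (Psi : seqZ) : seqZ :=
  fun j => if in_range lo hi j then Psi j else 0.

Definition is_zero (Psi : seqZ) : Prop := forall j, Psi j = 0.

Definition pmin (p : int) : int := Num.min p 0.
Definition qmax (q : int) : int := Num.max 0 q.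
Definition tau (p q : int) : int := qmax q - pmin p.

(* bulk solution space M_{L,R} = ker (P_{L-p',R-q'} A |_{V_{L,R}}) *)
Definition bulkM (a : int -> 'M[C]_d) (p q : int) (lo hi : option int)
  (Psi : seqZ) : Prop :=
  inV lo hi Psi /\
  is_zero (proj (ext_add lo (- pmin p)) (ext_add hi (- qmax q)) (bbl a p q Psi)).

Definition Fminus (a : int -> 'M[C]_d) (p q L : int) (Psi : seqZ) : Prop :=
  bulkM a p q (Some L) None Psi /\
  exists k : nat, (1 <= k)%N /\
    is_zero (iter k (fun Phi => proj (Some L) None (shiftT Phi)) Psi).

Definition Fplus (a : int -> 'M[C]_d) (p q R : int) (Psi : seqZ) : Prop :=
  bulkM a p q None (Some R) Psi /\
  exists k : nat, (1 <= k)%N /\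
    is_zero (iter k (fun Phi => proj None (Some R) (shiftTinv Phi)) Psi).

Definition kerA (a : int -> 'M[C]_d) (p q : int) (Psi : seqZ) : Prop :=
  is_zero (bbl a p q Psi).

Definition has_dim (S : seqZ -> Prop) (n : nat) : Prop :=
  exists b : 'I_n -> seqZ,
    [/\ forall i, S (b i),
        (forall c : 'I_n -> C, (forall j, \sum_i c i *: b i j = 0) ->
            forall i, c i = 0)
      & forall Psi, S Psi ->
          exists c : 'I_n -> C, forall j, Psi j = \sum_i c i *: b i j].

Definition Kminus (a : int -> 'M[C]_d) (p q L Lbar : int) (Psi : seqZ) : seqZ :=
  proj (Some (L - pmin p)) (Some (Lbar - pmin p)) (bbl a p q Psi).
Definition kerKminus (a : int -> 'M[C]_d) (p q L Lbar : int) (Psi : seqZ) : Prop :=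
  inV (Some L) (Some Lbar) Psi /\ is_zero (Kminus a p q L Lbar Psi).

Definition Kplus (a : int -> 'M[C]_d) (p q Rbar R : int) (Psi : seqZ) : seqZ :=
  proj (Some (Rbar - qmax q)) (Some (R - qmax q)) (bbl a p q Psi).
Definition kerKplus (a : int -> 'M[C]_d) (p q Rbar R : int) (Psi : seqZ) : Prop :=
  inV (Some Rbar) (Some R) Psi /\ is_zero (Kplus a p q Rbar R Psi).

End BBL.

(* Main.v *)
Require Import Defs.
From HB Require Import structures.
From mathcomp Require Import all_boot all_order all_algebra.
From mathcomp Require Import fingroup perm.
From mathcomp Require Import zify ring lra.
Set Implicit Arguments. Unset Strict Implicit. Unset Printing Implicit Defensive.
Import Order.TTheory GRing.Theory Num.Theory.
Local Open Scope ring_scope.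

Section Act.
Variables (C : numClosedFieldType) (d : nat).
Local Notation pM := 'M[{poly C}]_d.
Local Notation sq := (seqZ C d).

Definition coefm (P : pM) k : 'M[C]_d := \matrix_(i, l) (P i l)`_k.
Definition actN N (P : pM) (psi : sq) : sq :=
  fun j => \sum_(k < N) coefm P k *m psi (j + k%:Z).
Definition msize (P : pM) : nat := (\max_(il : 'I_d * 'I_d) size (P il.1 il.2))%N.
Definition act (P : pM) := actN (msize P) P.
Definition mono (M : 'M[C]_d) (k : nat) : pM := \matrix_(i, l) (M i l *: 'X^k).
Lemma msizeP (P : pM) i l : (size (P i l) <= msize P)%N.
Proof. rewrite /msize; set F := (fun il : 'I_d * 'I_d => size (P il.1 il.2)); have := @leq_bigmax _ F (i, l); by []. Qed.

Lemma coefm_big (P : pM) k : (forall i l, size (P i l) <= k)%N -> coefm P k = 0.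
Proof.
move=> h; apply/matrixP => i l; rewrite !mxE; exact: nth_default.
Qed.

Lemma actN_widen N M (P : pM) psi j : (forall i l, size (P i l) <= N)%N -> (N <= M)%N ->
  actN M P psi j = actN N P psi j.
Proof.
move=> hP hNM; rewrite /actN (big_ord_widen M (fun k => coefm P k *m psi (j + k%:Z)) hNM).
rewrite [RHS]big_mkcond /=; apply: eq_bigr => k _.
case: ifP => // /negbT; rewrite -leqNgt => hk.
rewrite coefm_big ?mul0mx // => i l; exact: leq_trans (hP i l) hk.
Qed.

Lemma actN_act N (P : pM) psi j : (forall i l, size (P i l) <= N)%N ->
  actN N P psi j = act P psi j.
Proof.
move=> hP; rewrite /act.
rewrite -(@actN_widen N (maxn N (msize P))) ?leq_maxl //.
rewrite (@actN_widen (msize P) (maxn N (msize P))) ?leq_maxr // => i l; exact: msizeP.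
Qed.

Lemma coefm_sum I (r : seq I) (F : I -> pM) k :
  coefm (\sum_(i <- r) F i) k = \sum_(i <- r) coefm (F i) k.
Proof.
apply/matrixP => i l; rewrite mxE !summxE coef_sum; apply: eq_bigr => x _.
by rewrite !mxE.
Qed.

Lemma actN_sum N I (r : seq I) (F : I -> pM) psi j :
  actN N (\sum_(i <- r) F i) psi j = \sum_(i <- r) actN N (F i) psi j.
Proof.
rewrite /actN exchange_big /=; apply: eq_bigr => k _.
by rewrite coefm_sum mulmx_suml.
Qed.

Lemma coefm_mono M m k : coefm (mono M m) k = if k == m then M else 0.
Proof.
apply/matrixP => i l; rewrite !mxE coefZ coefXn.
by case: eqP => _; rewrite ?mulr1 ?mulr0 ?mxE.
Qed.

Lemma actN_mono N M m psi j : (m < N)%N -> actN N (mono M m) psi j = M *m psi (j + m%:Z).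
Proof.
move=> hm; rewrite /actN (bigD1 (Ordinal hm)) //= coefm_mono eqxx big1 ?addr0 //.
move=> k hk; rewrite coefm_mono; case: eqP => [e|_]; last by rewrite mul0mx.
by case/eqP: hk; apply/val_inj.
Qed.

Lemma size_mono M m i l : (size (mono M m i l) <= m.+1)%N.
Proof.
rewrite mxE; apply: leq_trans (size_scale_leq _ _) _; by rewrite size_polyXn.
Qed.

Lemma mono_decomp N (P : pM) : (forall i l, size (P i l) <= N)%N ->
  P = \sum_(k < N) mono (coefm P k) k.
Proof.
move=> hP; apply/matrixP => i l; rewrite summxE.
rewrite (eq_bigr (fun k : 'I_N => (P i l)`_k *: 'X^k)); last first.
  by move=> k _; rewrite !mxE.
rewrite -(@poly_def _ N (fun k => (P i l)`_k)).
apply/polyP => k; rewrite coef_poly.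
case: ltnP => hk //.
by rewrite nth_default //; apply: leq_trans (hP i l) hk.
Qed.

Lemma mono_mul M M' m m' : mono M m *m mono M' m' = mono (M *m M') (m + m').
Proof.
apply/matrixP => i l; rewrite !mxE scaler_suml; apply: eq_bigr => b _.
by rewrite !mxE exprD -scalerAl -scalerAr scalerA.
Qed.

Lemma size_mulmx_le (P Q : pM) N1 N2 i l : (forall i l, size (P i l) <= N1)%N ->
  (forall i l, size (Q i l) <= N2)%N -> (size ((P *m Q) i l) <= N1 + N2)%N.
Proof.
move=> hP hQ; rewrite mxE; apply: leq_trans (size_sum _ _ _) _.
apply/bigmax_leqP => b _; apply: leq_trans (size_polyMleq _ _) _.
apply: leq_trans (leq_pred _) _; exact: leq_add.
Qed.

Lemma act_mul (P Q : pM) psi j : act (P *m Q) psi j = act P (act Q psi) j.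
Proof.
set N1 := msize P; set N2 := msize Q.
rewrite -(@actN_act (N1 + N2)); last by move=> i l; apply: size_mulmx_le => *; apply: msizeP.
have eP := @mono_decomp N1 P (fun i l => msizeP P i l).
have eQ := @mono_decomp N2 Q (fun i l => msizeP Q i l).
have -> : P *m Q = \sum_(k < N1) (mono (coefm P k) k *m \sum_(k' < N2) mono (coefm Q k') k').
  by rewrite -mulmx_suml -eQ -eP.
rewrite actN_sum [RHS]/act -/N1 [RHS]/actN; apply: eq_bigr => k _.
rewrite mulmx_sumr actN_sum [X in _ = _ *m X]/act -/N2 [X in _ = _ *m X]/actN mulmx_sumr; apply: eq_bigr => k' _.
rewrite mono_mul actN_mono; last by have := ltn_ord k; have := ltn_ord k'; lia.
by rewrite mulmxA PoszD addrA.
Qed.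

Lemma actN_lin N (P : pM) (x y : sq) c j :
  actN N P (fun j => x j - c *: y j) j = actN N P x j - c *: actN N P y j.
Proof.
rewrite /actN scaler_sumr -sumrB; apply: eq_bigr => k _.
by rewrite mulmxBr scalemxAr.
Qed.

Lemma actN_zero N (P : pM) j : actN N P (fun _ => 0) j = 0.
Proof. by rewrite /actN big1 // => k _; rewrite mulmx0. Qed.

Lemma actN_entry N (P : pM) psi j i :
  actN N P psi j i 0 = \sum_(k < N) \sum_l (P i l)`_k * psi (j + k%:Z) l 0.
Proof.
rewrite /actN summxE; apply: eq_bigr => k _; rewrite mxE; apply: eq_bigr => l _.
by rewrite mxE.
Qed.

Definition indep n (b : 'I_n -> sq) :=
  forall c : 'I_n -> C, (forall j, \sum_i c i *: b i j = 0) -> forall i, c i = 0.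

Lemma hyperplane n (b : 'I_n.+1 -> sq) (S : sq -> Prop) (ell : sq -> C) :
  indep b -> (forall i, S (b i)) ->
  (forall x y c, S x -> S y -> S (fun j => x j - c *: y j)) ->
  (forall x y c, ell (fun j => x j - c *: y j) = ell x - c * ell y) ->
  exists b' : 'I_n -> sq, indep b' /\ forall k, S (b' k) /\ ell (b' k) = 0.
Proof.
move=> hind hS hSc hl.
pose i0 := odflt ord_max [pick i | ell (b i) != 0].
pose t (k : 'I_n) := if ell (b i0) == 0 then 0 else ell (b (lift i0 k)) / ell (b i0).
exists (fun k j => b (lift i0 k) j - t k *: b i0 j); split; last first.
  move=> k; split; first by apply: hSc.
  rewrite hl /t; case: eqP => [e|/eqP ne]; last by rewrite divfK ?subrr.
  rewrite mul0r subr0; move: e; rewrite /i0; case: pickP => [i hi /= e|h _].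
    by move: hi; rewrite e eqxx.
  by have := h (lift (odflt ord_max None) k) => /= /negbFE /eqP.
move=> c hc.
pose c' (i : 'I_n.+1) := if unlift i0 i is Some k then c k else - \sum_k c k * t k.
have hc' : forall j, \sum_i c' i *: b i j = 0.
  move=> j; apply: etrans (hc j); rewrite (bigD1_ord i0) //= /c' unlift_none.
  under eq_bigr do rewrite liftK.
  under [RHS]eq_bigr do rewrite scalerBr scalerA.
  rewrite sumrB -scaler_suml scaleNr addrC. congr (_ - _ *: _).
move=> k; have := hind c' hc' (lift i0 k); by rewrite /c' liftK.
Qed.

Lemma actN_ext_seq N (P : pM) (x y : sq) j : (forall j, x j = y j) -> actN N P x j = actN N P y j.
Proof. by move=> h; rewrite /actN; apply: eq_bigr => k _; rewrite h. Qed.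

Lemma reduce_step (B : pM) (lam : C) : root (\det B) lam ->
  exists (B' : pM) (c : C) (i0 : 'I_d), [/\ c != 0,
    ('X - lam%:P) * \det B' = c%:P * \det B &
    forall psi, (forall j, act B psi j = 0) ->
      (forall j i, i != i0 -> act B' psi j i 0 = 0) /\
      (forall j, act B' psi (j + 1) i0 0 = lam * act B' psi j i0 0)].
Proof.
move=> hroot.
have : \det (map_mx (horner_eval lam) B) == 0.
  by rewrite det_map_mx.
case/det0P => v vn0 hv.
have [i1 hi1] : exists i1, v 0 i1 != 0.
  apply/existsP; apply: contraNT vn0; rewrite negb_exists => /forallP h.
  by apply/eqP/matrixP => a b; rewrite ord1 mxE; apply/eqP; move: (h b); rewrite negbK.
have [i0 hi0 hmax] : exists2 i0 : 'I_d, v 0 i0 != 0 & forall j, v 0 j != 0 -> (j <= i0)%N.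
  case: (@arg_maxnP _ i1 (fun i => v 0 i != 0) (fun i => nat_of_ord i) hi1) => i hi hm.
  by exists i.
pose W : pM := \matrix_(i, l) if i == i0 then (v 0 l)%:P else (i == l)%:R.
pose dv (i : 'I_d) : {poly C} := if i == i0 then 'X - lam%:P else 1.
pose D : pM := \matrix_(i, l) if i == l then dv i else 0.
pose s (l : 'I_d) := \sum_k (v 0 k)%:P * B k l.
have hdiv : forall l, ('X - lam%:P) %| s l.
  move=> l; rewrite -root_factor_theorem; apply/rootP.
  have := congr1 (fun M : 'M[C]_(1, d) => M 0 l) hv; rewrite !mxE => <-; rewrite /s horner_sum; apply: eq_bigr => k _.
  by rewrite hornerCM !mxE horner_evalE.
pose B' : pM := \matrix_(i, l) if i == i0 then s l %/ ('X - lam%:P) else B i l.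
have hDB : D *m B' = W *m B.
  apply/matrixP => i l; rewrite !mxE.
  rewrite (bigD1 i) //= !mxE eqxx big1 ?addr0; last first.
    by move=> k /negbTE hk; rewrite !mxE eq_sym hk mul0r.
  rewrite /dv; case: eqP => [->|/eqP hne].
    by rewrite divpKC ?hdiv // /s; apply: eq_bigr => k _; rewrite !mxE eqxx.
  rewrite mul1r (bigD1 i) //= !mxE (negbTE hne) eqxx mul1r big1 ?addr0 //.
  by move=> k /negbTE hk; rewrite !mxE (negbTE hne) eq_sym hk mul0r.
have hdetD : \det D = 'X - lam%:P.
  rewrite det_trig; last by apply/is_trig_mxP => i l hil; rewrite mxE; case: eqP => // e; move: hil; rewrite e ltnn.
  rewrite (bigD1 i0) //= mxE eqxx /dv eqxx big1 ?mulr1 // => i /negbTE hi.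
  by rewrite mxE eqxx /dv hi.
have hdetW : \det W = (v 0 i0)%:P.
  rewrite det_trig; last first.
    apply/is_trig_mxP => i l hil; rewrite mxE; case: eqP => [ei|/eqP ne].
      apply/eqP; rewrite polyC_eq0; apply: contraTT hil => /hmax; rewrite -ei -leqNgt.
      done.
    by case: eqP => // e; move: hil; rewrite e ltnn.
  rewrite (bigD1 i0) //= mxE eqxx big1 ?mulr1 // => i /negbTE hi.
  by rewrite mxE hi eqxx.
exists B', (v 0 i0), i0; split => //.
  by rewrite -hdetD -hdetW -!det_mulmx hDB.
move=> psi hpsi.
have h0 : forall j, act D (act B' psi) j = 0.
  move=> j; rewrite -act_mul hDB act_mul /act.
  by rewrite (@actN_ext_seq _ _ _ (fun _ => 0)) ?actN_zero.
have hD : forall j i, act D (act B' psi) j i 0 =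
    (dv i)`_0 * act B' psi j i 0 + (dv i)`_1 * act B' psi (j + 1) i 0.
  move=> j i; rewrite -(@actN_act 2); last first.
    move=> a b; rewrite mxE; case: eqP => _; rewrite ?size_poly0 //.
    by rewrite /dv; case: eqP => _; rewrite ?size_XsubC ?size_poly1.
  rewrite actN_entry !big_ord_recr big_ord0 /= addr0 -addrA (addrC 0) addr0.
  congr (_ + _).
    rewrite (bigD1 i) //= mxE eqxx big1 ?addr0 // => l /negbTE hl.
    by rewrite mxE eq_sym hl coef0 mul0r.
  rewrite (bigD1 i) //= mxE eqxx big1 ?addr0 // => l /negbTE hl.
  by rewrite mxE eq_sym hl coef0 mul0r.
split.
  move=> j i hi; have := hD j i; rewrite h0 mxE /dv (negbTE hi) coefC coefC /= mul1r mul0r addr0.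
  by move=> <-.
move=> j; have := hD j i0; rewrite h0 mxE /dv eqxx coefB coefB coefX coefX coefC coefC /=.
rewrite sub0r subr0 mul1r mulNr => /eqP; rewrite eq_sym addrC subr_eq0 => /eqP.
by [].
Qed.

Lemma geom0 (x : int -> C) lam : (forall j, x (j + 1) = lam * x j) -> x 0 = 0 ->
  forall j, x j = 0.
Proof.
move=> hx h0.
have key : forall m : nat, x m%:Z = 0 /\ x (- m%:Z) = 0.
  elim=> [|m [h1 h2]]; first by rewrite oppr0.
  split; first by rewrite -addn1 PoszD hx h1 mulr0.
  have e : x (- m%:Z) = lam * x (- m.+1%:Z).
    by rewrite -hx; congr x; rewrite -addn1 PoszD opprD addrNK.
  have [lz|lne] := eqVneq lam 0.
    by rewrite -[- _](addrNK 1) hx lz mul0r.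
  by move: h2; rewrite e => /eqP; rewrite mulf_eq0 (negbTE lne) /= => /eqP.
by case=> m; [case: (key m)| rewrite NegzE; case: (key m.+1)].
Qed.

Lemma act_scalar (c : C) psi j : act ((c%:P)%:M : pM) psi j = c *: psi j.
Proof.
rewrite -(@actN_act 1); last first.
  by move=> i l; rewrite mxE; case: (i == l); rewrite /= ?mulr1n ?mulr0n ?size_polyC ?size_poly0 ?leq_b1.
rewrite /actN big_ord1 addr0 -mul_scalar_mx; congr (_ *m _).
apply/matrixP => i l; rewrite !mxE; case: (i == l); by rewrite /= ?mulr1n ?mulr0n ?coefC ?coef0.
Qed.

Lemma ker_entries (P : pM) psi (i0 : 'I_d) lam :
  (forall j i, i != i0 -> act P psi j i 0 = 0) ->
  (forall j, act P psi (j + 1) i0 0 = lam * act P psi j i0 0) ->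
  act P psi 0 i0 0 = 0 -> forall j, act P psi j = 0.
Proof.
move=> h1 h2 h3 j; apply/matrixP => i k; rewrite ord1 mxE.
have [->|ne] := eqVneq i i0; last exact: h1.
exact: (geom0 (x := fun j => act P psi j i0 0) h2).
Qed.

Lemma dim_bound m : forall (B : pM) s (g : {poly C}) n (b : 'I_n -> sq), (s + size g <= m)%N ->
  \det B = 'X^s * g -> g != 0 -> indep b -> (forall i j, act B (b i) j = 0) ->
  (n <= (size g).-1)%N.
Proof.
elim: m => [|m IH] B s g n b hm hdet hg hind hker.
  by move: hm; rewrite leqn0 addn_eq0 size_poly_eq0 (negbTE hg) andbF.
case: n b hind hker => [//|n] b hind hker.
case: s hm hdet => [|s] hm hdet; last first.
  have hr : root (\det B) 0 by rewrite hdet rootE hornerM hornerXn expr0n /= mul0r.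
  have [B' [c [i0 [hc hdB hk]]]] := reduce_step hr.
  have hdet' : \det B' = 'X^s * (c%:P * g).
    apply: (@mulfI _ 'X); first by rewrite polyX_eq0.
    by rewrite -[X in X * _]subr0 -polyC0 hdB hdet exprS mulrCA !mulrA.
  have := IH B' s (c%:P * g) n.+1 b; rewrite size_Cmul //; apply => //.
  - by rewrite mulf_neq0 ?polyC_eq0.
  move=> i; have [h1 h2] := hk _ (hker i).
  apply: (ker_entries h1 h2).
  by have := h2 (-1); rewrite addNr mul0r.
rewrite expr0 mul1r in hdet.
have [hs1|hs2] := leqP (size g) 1.
  have hsz : size g = 1%N by apply/anti_leq; rewrite hs1 lt0n size_poly_eq0.
  have hgc : g = (g`_0)%:P by rewrite [LHS]size1_polyC ?hsz.
  have hc0 : g`_0 != 0 by rewrite -polyC_eq0 -hgc.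
  have hz : forall i j, b i j = 0.
    move=> i j; have := act_mul (\adj B) B (b i) j.
    rewrite mul_adj_mx hdet hgc act_scalar /act (@actN_ext_seq _ _ _ (fun _ => 0)); last exact: hker.
    rewrite actN_zero => /eqP; rewrite scaler_eq0 (negbTE hc0) /= => /eqP; exact.
  have h1 : forall j, \sum_i (fun _ => 1 : C) i *: b i j = 0 by move=> j; apply: big1 => i _; rewrite hz scaler0.
  have := hind _ h1 ord0.
  by move/eqP; rewrite oner_eq0.
have [lam hlam] : exists lam, root g lam.
  by apply/closed_rootP; rewrite neq_ltn hs2 orbT.
rewrite -hdet in hlam.
have [B' [c [i0 [hc hdB hk]]]] := reduce_step hlam.
have hdB0 : \det B' != 0.
  apply/eqP => e; move: hdB; rewrite e mulr0 hdet => /esym/eqP.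
  by rewrite mulf_eq0 polyC_eq0 (negbTE hc) (negbTE hg).
have hsz : size (\det B') = (size g).-1.
  have := congr1 (fun p : {poly C} => size p) hdB; rewrite size_Cmul // hdet size_mul ?polyXsubC_eq0 //.
  by rewrite size_XsubC addSn /= => <-.
have hSc : forall (x y : sq) (c0 : C), (forall j, act B x j = 0) -> (forall j, act B y j = 0) ->
    forall j, act B (fun j => x j - c0 *: y j) j = 0.
  by move=> x y c0 hx hy j; rewrite /act actN_lin -/(act B x j) -/(act B y j) hx hy scaler0 subr0.
have hlin : forall (x y : sq) (c0 : C), act B' (fun j => x j - c0 *: y j) 0 i0 0 =
    act B' x 0 i0 0 - c0 * act B' y 0 i0 0.
  by move=> x y c0; rewrite /act actN_lin !mxE.
have [b' [hind' hb']] := @hyperplane n b (fun psi => forall j, act B psi j = 0)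
   (fun psi => act B' psi 0 i0 0) hind hker hSc hlin.
have hkb : forall (k : 'I_n) j, act B' (b' k) j = 0.
  move=> k; have [hkB hl] := hb' k; have [h1 h2] := hk _ hkB.
  exact: ker_entries h1 h2 hl.
have hm' : (0 + size (\det B') <= m)%N by rewrite hsz; move: hm hs2; rewrite add0n; case: (size g).
have := IH B' 0 (\det B') n b' hm' (esym (mul1r _)) hdB0 hind' hkb.
rewrite hsz; move: hs2; case: (size g) => [|[|k]] //.
Qed.

Lemma size_prod_le n (F : 'I_n -> {poly C}) N : (forall i, size (F i) <= N.+1)%N ->
  (size (\prod_(i < n) F i)%R <= n * N + 1)%N.
Proof.
elim: n F => [|n IH] F hF; first by rewrite big_ord0 size_poly1.
rewrite big_ord_recr /=; apply: leq_trans (size_polyMleq _ _) _.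
have h1 := IH (fun i => F (widen_ord (leqnSn n) i)) (fun i => hF _).
have h2 := hF ord_max.
move: h1 h2; set a := size _; set b := size _; move=> h1 h2.
rewrite mulSn; lia.
Qed.

Lemma size_det_le n (M : 'M[{poly C}]_n) N : (forall i j, size (M i j) <= N.+1)%N ->
  (size (\det M) <= n * N + 1)%N.
Proof.
move=> hM; rewrite /determinant; apply: leq_trans (size_sum _ _ _) _.
apply/bigmax_leqP => sg _; apply: leq_trans (size_polyMleq _ _) _.
have hs : forall k, (size ((-1) ^+ k : {poly C}) <= 1)%N.
  by move=> k; rewrite -signr_odd; case: (odd k); rewrite /= ?expr1 ?expr0 ?size_polyN ?size_poly1.
have := size_prod_le (fun i => hM i (sg i)); set a := size _; move=> h.
have := hs (odd_perm sg); set b := size _; move=> hs'; lia.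
Qed.

Lemma size_adj_le (M : pM) N : (forall i j, size (M i j) <= N.+1)%N ->
  forall i j, (size (\adj M i j) <= d.-1 * N + 1)%N.
Proof.
move=> hM i j; rewrite mxE /cofactor; apply: leq_trans (size_polyMleq _ _) _.
have hs : (size ((-1) ^+ (j + i)%N : {poly C}) <= 1)%N.
  by rewrite -signr_odd; case: (odd _); rewrite /= ?expr1 ?expr0 ?size_polyN ?size_poly1.
have hM' : forall a b, (size (row' j (col' i M) a b) <= N.+1)%N by move=> a b; rewrite !mxE; apply: hM.
have := @size_det_le _ (row' j (col' i M)) N hM'.
set a := size _; move=> h; move: hs; set b := size _; move=> hs; lia.
Qed.

Lemma factorX (P : {poly C}) : P != 0 -> exists s (g : {poly C}), P = 'X^s * g /\ g`_0 != 0.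
Proof.
move=> hP.
have hex : exists i, P`_i != 0 by exists (size P).-1; rewrite -lead_coefE lead_coef_eq0.
case: (ex_minnP hex) => s hs hmin.
exists s, (drop_poly s P); split; last by rewrite coef_drop_poly add0n.
rewrite -{1}(poly_take_drop s P) mulrC.
have -> : take_poly s P = 0.
  apply/polyP => i; rewrite coef_take_poly coef0; case: ltnP => // his.
  by apply/eqP; apply: contraTT his => /hmin; rewrite -leqNgt.
by rewrite add0r.
Qed.

Definition Bmat (a : int -> 'M[C]_d) (p q : int) : pM :=
  \matrix_(i, j) \poly_(k < `|q - p|%N.+1) (a (p + k%:Z) i j).

Lemma Bmat_size a p q i j : (size (Bmat a p q i j) <= `|q - p|%N.+1)%N.
Proof. by rewrite mxE; apply: size_poly. Qed.

Lemma bbl_act a p q (psi : sq) j : bbl a p q psi j = act (Bmat a p q) psi (j + p).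
Proof.
rewrite -(@actN_act `|q - p|%N.+1); last by move=> *; apply: Bmat_size.
rewrite /bbl /actN; apply: eq_bigr => k _; congr (_ *m _); last by rewrite addrA.
by apply/matrixP => i l; rewrite !mxE coef_poly ltn_ord.
Qed.

Lemma act_scalarP (P : {poly C}) (psi : sq) j :
  act (P%:M : pM) psi j = \sum_(k < size P) P`_k *: psi (j + k%:Z).
Proof.
rewrite -(@actN_act (size P)); last first.
  by move=> i l; rewrite mxE; case: (i == l); rewrite /= ?mulr1n ?mulr0n ?size_poly0.
rewrite /actN; apply: eq_bigr => k _; rewrite -mul_scalar_mx; congr (_ *m _).
apply/matrixP => i l; rewrite !mxE; case: (i == l); by rewrite /= ?mulr1n ?mulr0n ?coef0.
Qed.

Lemma det_eq_left (B : pM) (psi : sq) c :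
  (forall i, i >= c -> act B psi i = 0) ->
  forall i, i >= c -> \sum_(k < size (\det B)) (\det B)`_k *: psi (i + k%:Z) = 0.
Proof.
move=> h i hi; rewrite -act_scalarP -mul_adj_mx act_mul /act /actN big1 // => k _.
have hk : i + k%:Z >= c by rewrite (le_trans hi) // lerDl.
by have := h _ hk; rewrite /act /actN => ->; rewrite mulmx0.
Qed.

Lemma det_eq_right (B : pM) (psi : sq) c N : (forall i j, size (\adj B i j) <= N.+1)%N ->
  (forall i, i <= c -> act B psi i = 0) ->
  forall i, i <= c - N%:Z -> \sum_(k < size (\det B)) (\det B)`_k *: psi (i + k%:Z) = 0.
Proof.
move=> hN h i hi; rewrite -act_scalarP -mul_adj_mx act_mul -(@actN_act N.+1) //.
rewrite /actN big1 // => k _.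
have hk : i + k%:Z <= c.
  apply: le_trans (lerD hi (_ : k%:Z <= N%:Z)) _; first by rewrite lez_nat -ltnS.
  by rewrite subrK.
by have := h _ hk; rewrite /act /actN => ->; rewrite mulmx0.
Qed.

Lemma left_zero (P g : {poly C}) s (psi : sq) c K :
  P = 'X^s * g -> g`_0 != 0 ->
  (forall j, j >= K -> psi j = 0) ->
  (forall i, i >= c -> \sum_(k < size P) P`_k *: psi (i + k%:Z) = 0) ->
  forall t, t >= c + s%:Z -> psi t = 0.
Proof.
move=> hP hg hK heq.
have hPs : P`_s = g`_0 by rewrite hP coefXnM ltnn subnn.
have hsP : (s < size P)%N.
  rewrite ltnNge; apply/negP => hle; move/eqP: hg; apply.
  by rewrite -hPs nth_default.
have key : forall m : nat, forall t, t >= c + s%:Z -> t >= K - m%:Z -> psi t = 0.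
  elim=> [|m IH] t ht htK; first by apply: hK; rewrite subr0 in htK.
  have [ht1|ht1] := lerP (K - m%:Z) t; first exact: IH.
  have hc : c <= t - s%:Z by lia.
  have eP : forall k : nat, P`_k = ('X^s * g)`_k by move=> k; rewrite hP.
  have := heq (t - s%:Z) hc.
  rewrite (bigD1 (Ordinal hsP)) //= big1; last first.
    move=> k hk; have ek := eP k.
    rewrite ek coefXnM; case: ltnP => hks; first by rewrite scale0r.
    have hks' : (s < k)%N.
      rewrite ltn_neqAle hks andbT; apply: contraNneq hk => e; apply/eqP/val_inj => /=.
      by rewrite e.
    rewrite IH ?scaler0 //; lia.
  rewrite addr0 subrK hPs => /eqP; rewrite scaler_eq0 (negbTE hg) /= => /eqP //.
move=> t ht; apply: (key `|K - t|%N t ht); lia.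
Qed.

Lemma right_zero (P : {poly C}) (psi : sq) c K :
  P != 0 ->
  (forall j, j <= K -> psi j = 0) ->
  (forall i, i <= c -> \sum_(k < size P) P`_k *: psi (i + k%:Z) = 0) ->
  forall t, t <= c + (size P).-1%:Z -> psi t = 0.
Proof.
move=> hP hK heq.
have hsP : ((size P).-1 < size P)%N by rewrite prednK // lt0n size_poly_eq0.
have hl : P`_(size P).-1 != 0 by rewrite -lead_coefE lead_coef_eq0.
set D := (size P).-1 in hsP hl *.
have key : forall m : nat, forall t, t <= c + D%:Z -> t <= K + m%:Z -> psi t = 0.
  elim=> [|m IH] t ht htK; first by apply: hK; rewrite addr0 in htK.
  have [ht1|ht1] := lerP t (K + m%:Z); first exact: IH.
  have hc : t - D%:Z <= c by lia.
  have := heq (t - D%:Z) hc.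
  rewrite (bigD1 (Ordinal hsP)) //= big1; last first.
    move=> k hk; have hks : (k < D)%N.
      have hk' : (k : nat) != D by apply: contraNneq hk => e; apply/eqP/val_inj.
      rewrite ltn_neqAle hk' /= -ltnS /D prednK ?lt0n ?size_poly_eq0 //.
    rewrite IH ?scaler0 //; lia.
  rewrite addr0 subrK => /eqP; rewrite scaler_eq0 (negbTE hl) /= => /eqP //.
move=> t ht; apply: (key `|t - K|%N t ht); lia.
Qed.

Lemma iterL L k (Psi : sq) j :
  iter k.+1 (fun Phi => proj (Some L) None (shiftT Phi)) Psi j =
  if L <= j then Psi (j + k.+1%:Z) else 0.
Proof.
elim: k j => [|k IH] j; first by rewrite /= /proj /shiftT /in_range andbT.
rewrite iterS {1}/proj /shiftT /in_range andbT IH.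
case: (leP L j) => h; last by [].
rewrite ifT; last by apply: le_trans h _; rewrite lerDl.
by rewrite -addrA; congr (Psi (_ + _)); lia.
Qed.

Lemma iterR R k (Psi : sq) j :
  iter k.+1 (fun Phi => proj None (Some R) (shiftTinv Phi)) Psi j =
  if j <= R then Psi (j - k.+1%:Z) else 0.
Proof.
elim: k j => [|k IH] j; first by rewrite /= /proj /shiftTinv /=.
rewrite iterS {1}/proj {1}/shiftTinv {1}/in_range IH /=.
case: (leP j R) => h; last by [].
rewrite ifT; last by apply: le_trans h; rewrite lerBlDr lerDl.
by rewrite -addrA; congr (Psi (_ + _)); lia.
Qed.

Lemma pminP (p : int) : pmin p <= p /\ pmin p <= 0 /\ (pmin p = p \/ pmin p = 0).
Proof. rewrite /pmin /Num.min /=; case: ltP => h; lia. Qed.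

Lemma qmaxP (q : int) : q <= qmax q /\ 0 <= qmax q /\ (qmax q = q \/ qmax q = 0).
Proof. rewrite /qmax /Num.max /=; case: ltP => h; lia. Qed.
End Act.

Theorem mainTheorem12 (C : numClosedFieldType) (d : nat) (hd : (0 < d)%N)
  (a : int -> 'M[C]_d) (p q : int)
  (hband : bandwidth a p q) (hreg : regular a p q)
  (n : nat) (hdim : has_dim (kerA a p q) n)
  (L R : int) (hLR : L <= R)
  (hN : R - L + 1 >= tau p q + 2 * (d%:Z * tau p q - n%:Z)) :
  let sigma := d%:Z * tau p q - n%:Z in
  let Lbar := L + sigma - 1 in
  let Rbar := R - sigma + 1 in
  (forall Psi : int -> 'cV[C]_d, Fminus a p q L Psi <-> kerKminus a p q L Lbar Psi) /\
  (forall Psi : int -> 'cV[C]_d, Fplus a p q R Psi <-> kerKplus a p q Rbar R Psi).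
Proof.
move=> sigma Lbar Rbar.
set B := Bmat a p q.
have hdet0 : \det B != 0 := hreg.
case: (factorX hdet0) => s [g [hdg hg0]].
have hg : g != 0 by apply: contraNneq hg0 => ->; rewrite coef0.
case: hdim => b [hbS hind _].
have hker : forall i j, act B (b i) j = 0.
  by move=> i j; have := hbS i (j - p); rewrite bbl_act subrK.
have hn := @dim_bound _ _ _ B s g n b (leqnn _) hdg hg hind hker.
have hsz := @size_det_le _ _ B `|q - p|%N (@Bmat_size _ _ a p q).
have hsd : size (\det B) = (s + size g)%N.
  by rewrite hdg size_mul ?expf_neq0 ?polyX_eq0 // size_polyXn addSn.
have hadj := @size_adj_le _ _ B `|q - p|%N (@Bmat_size _ _ a p q).
have habs : (`|q - p|%N)%:Z = q - p.
  by rewrite gez0_abs // subr_ge0; case: hband.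
have hpq : p <= q by case: hband.
have [hp1 [hp2 hp3]] := pminP p.
have [hq1 [hq2 hq3]] := qmaxP q.
have hgs : (1 <= size g)%N by rewrite lt0n size_poly_eq0.
have hdm1 : (d.-1)%:Z = d%:Z - 1 by rewrite -(prednK hd) /= -addn1 PoszD addrK.
have key1 : d%:Z * tau p q >= d%:Z * (q - p) + (p - pmin p).
  rewrite /tau; have : 0 <= (qmax q - q) + (p - pmin p) by lia.
  have : d%:Z * (qmax q - pmin p) = d%:Z * (q - p) + d%:Z * ((qmax q - q) + (p - pmin p)) by ring.
  move=> ->; move=> h; have hd' : (1 <= d%:Z) by rewrite lez_nat.
  nia.
have key2 : d%:Z * tau p q >= (qmax q - p) + (d%:Z - 1) * (q - p).
  rewrite /tau; have hd' : (1 <= d%:Z) by rewrite lez_nat.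
  have : d%:Z * (qmax q - pmin p) = (qmax q - pmin p) + (d%:Z - 1) * (qmax q - pmin p) by ring.
  move=> ->; nia.
have hsz' : ((s + size g)%:Z <= d%:Z * (q - p) + 1).
  by rewrite -habs -hsd -PoszM -PoszD lez_nat.
split => Psi; split.
- case=> [[hinv hbulk] [[|k] [hk1 hit]]]; first by [].
  have hinv' : forall j, j < L -> Psi j = 0.
    by move=> j hj; apply: hinv; rewrite /in_range andbT -ltNge.
  have hbulk' : forall j, L - pmin p <= j -> bbl a p q Psi j = 0.
    by move=> j hj; have := hbulk j; rewrite /proj /in_range /= andbT hj.
  have hfin : forall j, L + k.+1%:Z <= j -> Psi j = 0.
    move=> j hj; have := hit (j - k.+1%:Z); rewrite iterL subrK ifT //.
    by rewrite lerBrDr.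
  have hB : forall i, i >= L - pmin p + p -> act B Psi i = 0.
    by move=> i hi; rewrite -(subrK p i) -bbl_act hbulk' // lerBrDr.
  have hz := left_zero hdg hg0 hfin (det_eq_left hB).
  split.
    move=> j; rewrite /in_range negb_and -!ltNge => /orP [hj|hj]; first exact: hinv'.
    apply: hz; rewrite /Lbar /sigma in hj; lia.
  move=> j; rewrite /Kminus /proj /in_range; case: ifP => // /andP [hj _].
  exact: hbulk'.
- case=> hinv hK.
  have hinv' : forall j, (j < L) || (Lbar < j) -> Psi j = 0.
    by move=> j hj; apply: hinv; rewrite /in_range negb_and -!ltNge.
  split; last first.
    exists (`|Lbar - L|%N.+1); split; first by [].
    move=> j; rewrite iterL; case: ifP => // hj; apply: hinv'; apply/orP; right; lia.
  split; first by move=> j; rewrite /in_range andbT => hj; apply: hinv'; rewrite ltNge hj.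
  move=> j; rewrite /proj /in_range /= andbT; case: ifP => // hj.
  case: (leP j (Lbar - pmin p)) => hj2.
    by have := hK j; rewrite /Kminus /proj /in_range hj hj2.
  rewrite /bbl big1 // => k _; rewrite hinv' ?mulmx0 //; apply/orP; right.
  lia.
- case=> [[hinv hbulk] [[|k] [hk1 hit]]]; first by [].
  have hinv' : forall j, R < j -> Psi j = 0.
    by move=> j hj; apply: hinv; rewrite /in_range /= -ltNge.
  have hbulk' : forall j, j <= R - qmax q -> bbl a p q Psi j = 0.
    by move=> j hj; have := hbulk j; rewrite /proj /in_range /= hj.
  have hfin : forall j, j <= R - k.+1%:Z -> Psi j = 0.
    move=> j hj; have := hit (j + k.+1%:Z); rewrite iterR addrK ifT //.
    by rewrite -lerBrDr.
  have hB : forall i, i <= R - qmax q + p -> act B Psi i = 0.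
    by move=> i hi; rewrite -(subrK p i) -bbl_act hbulk' // lerBlDr.
  have hadj' : forall i j, (size (\adj B i j) <= (d.-1 * `|q - p|).+1)%N.
    by move=> i j; rewrite -addn1; apply: hadj.
  have hz := right_zero hdet0 hfin (det_eq_right hadj' hB).
  have hNa : ((d.-1 * `|q - p|)%N)%:Z = (d%:Z - 1) * (q - p) by rewrite PoszM hdm1 habs.
  have hDz : ((size (\det B)).-1)%:Z = s%:Z + (size g)%:Z - 1.
    rewrite hsd; move: hgs; case: (size g) => [|m] //= _; rewrite addnS /=; lia.
  split.
    move=> j; rewrite /in_range negb_and -!ltNge => /orP [hj|hj]; last exact: hinv'.
    apply: hz; rewrite hNa hDz; rewrite /Rbar /sigma in hj; lia.
  move=> j; rewrite /Kplus /proj /in_range; case: ifP => // /andP [_ hj].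
  exact: hbulk'.
- case=> hinv hK.
  have hinv' : forall j, (j < Rbar) || (R < j) -> Psi j = 0.
    by move=> j hj; apply: hinv; rewrite /in_range negb_and -!ltNge.
  split; last first.
    exists (`|R - Rbar|%N.+1); split; first by [].
    move=> j; rewrite iterR; case: ifP => // hj; apply: hinv'; apply/orP; left; lia.
  split; first by move=> j; rewrite /in_range /= -ltNge => hj; apply: hinv'; rewrite hj orbT.
  move=> j; rewrite /proj /in_range /=; case: ifP => // hj.
  case: (leP (Rbar - qmax q) j) => hj2.
    by have := hK j; rewrite /Kplus /proj /in_range hj hj2.
  rewrite /bbl big1 // => k _; rewrite hinv' ?mulmx0 //; apply/orP; left.
  have := ltn_ord k; rewrite ltnS -lez_nat habs => hk.
  lia.
Qed.
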